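(* Let $\mathcal{C}$ be a translation based cipher over $V=(\mathbb{F}_2)^{mn}$ with a strongly proper round $h$, and suppose that for some integer $r$ every brick of the bricklayer transformation $\gamma_h$ satisfies either (A) $1<r<m$, the brick is differentially $2^r$-uniform and strongly $(r-1)$-anti-invariant; or (B) $1\le r<m$, the brick is weakly $2^r$-uniform and strongly $r$-anti-invariant (with the same alternative (A) or (B) for all bricks). Then $\Gamma_h(\mathcal{C})$ is primitive and is not a wreath product; that is, writing $mn=d$, it is not the case that $\Gamma_h(\mathcal{C})=(S_1\times\dots\times S_c).O.P$ with $T(V)=T_1\times\dots\times T_c$, where $c>1$ divides $d$, each $T_i$ is an abelian subgroup of $S_i$ of order $2^{d/c}$, each $S_i\cong\mathrm{Alt}(2^{d/c})$ or $\mathrm{Sym}(2^{d/c})$, the $S_i$ are all conjugate, $O\le\mathrm{Out}(S_1)\times\dots\times\mathrm{Out}(S_c)$, and $P$ permutes the $S_i$ transitively.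
   Context: Permutations act on the right. Let $m,n>1$ and $V=V_1\oplus\dots\oplus V_n$ with each $V_i\cong(\mathbb{F}_2)^m$. $\sigma_v:x\mapsto x+v$, $T(V)=\{\sigma_v:v\in V\}$. A bricklayer transformation is a permutation $\gamma$ of $V$ with permutations (''bricks'') $\gamma_i$ of $V_i$ such that $(v_1+\dots+v_n)\gamma=v_1\gamma_1+\dots+v_n\gamma_n$. A wall is a nontrivial proper subspace of $V$ that is a sum of some $V_i$; $\lambda\in\mathrm{GL}(V)$ is a proper mixing layer if no wall is $\lambda$-invariant, and strongly proper if there are no walls $W,W'$ with $W\lambda=W'$. A tb cipher $\mathcal{C}=\{\tau_k:k\in\mathcal{K}\}$ has $\tau_k=\tau_{k,1}\cdots\tau_{k,l}$ with $\tau_{k,h}=\gamma_h\lambda_h\sigma_{\phi(k,h)}$, $\gamma_h$ a key-independent bricklayer transformation with $0\gamma_h=0$, $\lambda_h\in\mathrm{GL}(V)$ key-independent, $\phi:\mathcal{K}\times\{1,\dots,l\}\to V$; a round $h$ is proper if $\lambda_h$ is a proper mixing layer and $k\mapsto\phi(k,h)$ is onto $V$ (a tb cipher has at least one proper round), and strongly proper if moreover $\lambda_h$ is strongly proper. $\Gamma_h(\mathcal{C})=\langle\tau_{k,h}:k\in\mathcal{K}\rangle$. For $f:(\mathbb{F}_2)^m\to(\mathbb{F}_2)^m$, $\hat f_u(x)=f(x+u)+f(x)$. $f$ is differentially $\delta$-uniform if $|\{x:\hat f_u(x)=v\}|\le\delta$ for all $u\ne0$, all $v$; weakly $\delta$-uniform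 if $|\mathrm{Im}(\hat f_u)|>2^{m-1}/\delta$ for all $u\ne0$. For $1\le s<m$, $f$ is strongly $s$-anti-invariant if for any subspaces $U,W$ with $f(U)=W$, either $\dim U=\dim W<m-s$ or $U=W=(\mathbb{F}_2)^m$. The notation $G=(S_1\times\dots\times S_c).O.P$ means $S_1\times\dots\times S_c$ is normal in $G$ and the quotient is an extension of $O$ by $P$. *)

(* Defs.v *)
From HB Require Import structures.
From mathcomp Require Import all_boot all_order all_algebra all_fingroup all_solvable all_field.
Set Implicit Arguments. Unset Strict Implicit. Unset Printing Implicit Defensive.
Import GRing.Theory.

(* The whole space
   V = V_1 (+) ... (+) V_n is modelled as {ffun 'I_n -> 'rV['F_2]_m},
   the i-th component v i being the V_i-component of v.
   Permutations in MathComp compose left-to-right: (s * t) x = t (s x),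
   i.e. they act on the right, as in the paper. *)
Notation brickT m := 'rV['F_2]_m.
Notation stateT m n := {ffun 'I_n -> 'rV['F_2]_m}.

Definition transl (m n : nat) (v : stateT m n) : {perm stateT m n} :=
  perm (can_inj (addrK v)).

Definition translGroup (m n : nat) : {set {perm stateT m n}} :=
  [set transl v | v : stateT m n].

Definition wall (m n : nat) (S : {set 'I_n}) : {set stateT m n} :=
  [set v : stateT m n | [forall i, (i \notin S) ==> (v i == 0%R)]].

Definition is_wall_index (n : nat) (S : {set 'I_n}) : Prop :=
  S != set0 /\ S != [set: 'I_n].

Definition in_GL (m n : nat) (lam : {perm stateT m n}) : Prop :=
  linear (fun x : stateT m n => lam x).

Definition proper_mixing (m n : nat) (lam : {perm stateT m n}) : Prop :=
  forall S : {set 'I_n}, is_wall_index S -> lam @: wall m S <> wall m S.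

Definition strongly_proper_mixing (m n : nat) (lam : {perm stateT m n}) : Prop :=
  forall S S' : {set 'I_n}, is_wall_index S -> is_wall_index S' ->
    lam @: wall m S <> wall m S'.

Definition bricklayer_with (m n : nat) (gam : {perm stateT m n})
    (b : 'I_n -> {perm brickT m}) : Prop :=
  forall v : stateT m n, gam v = [ffun i => b i (v i)].

Definition round_perm (m n l : nat) (K : finType)
    (gam lam : 'I_l -> {perm stateT m n}) (phi : K -> 'I_l -> stateT m n)
    (k : K) (h : 'I_l) : {perm stateT m n} :=
  gam h * lam h * transl (phi k h).

Definition Gamma_h (m n l : nat) (K : finType)
    (gam lam : 'I_l -> {perm stateT m n}) (phi : K -> 'I_l -> stateT m n)
    (h : 'I_l) : {group {perm stateT m n}} :=
  <<[set round_perm gam lam phi k h | k : K]>>%G.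

Definition strongly_proper_round (m n l : nat) (K : finType)
    (lam : 'I_l -> {perm stateT m n}) (phi : K -> 'I_l -> stateT m n)
    (h : 'I_l) : Prop :=
  [/\ proper_mixing (lam h), strongly_proper_mixing (lam h)
    & forall v : stateT m n, exists k : K, phi k h = v].

Definition fder (m : nat) (f : brickT m -> brickT m) (u x : brickT m) : brickT m :=
  (f (x + u) + f x)%R.

Definition diff_uniform (m : nat) (f : brickT m -> brickT m) (delta : nat) : Prop :=
  forall u v : brickT m, u != 0%R ->
    #|[set x : brickT m | fder f u x == v]| <= delta.

(* |Im(hat f_u)| > 2^(m-1)/delta, written multiplicatively (delta > 0) *)
Definition weakly_uniform (m : nat) (f : brickT m -> brickT m) (delta : nat) : Prop :=
  forall u : brickT m, u != 0%R ->
    2 ^ (m - 1) < #|[set fder f u x | x : brickT m]| * delta.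

Definition strongly_anti_invariant (m : nat) (f : brickT m -> brickT m) (s : nat) : Prop :=
  forall U W : {vspace brickT m},
    f @: [set x : brickT m | x \in U] = [set x : brickT m | x \in W] ->
    ((\dim U = \dim W) /\ \dim U < m - s) \/ (U = fullv /\ W = fullv).

Local Open Scope group_scope.
Definition wreath_type (m n : nat) (G : {group {perm stateT m n}}) : Prop :=
  let d := (m * n)%N in
  exists (c : nat) (S T : 'I_c -> {group {perm stateT m n}})
         (N : {group {perm stateT m n}}),
  [/\ 1 < c /\ c %| d,
     (\big[dprod/1]_(i < c) S i = N /\ (N <| G)%g),
     (\big[dprod/1]_(i < c) T i = translGroup m n /\
       (forall i, [/\ T i \subset S i, abelian (T i) & #|T i| = (2 ^ (divn d c))%N])),
     (forall i, S i \isog 'Alt_('I_((2 ^ (divn d c))%N))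
                \/ S i \isog 'Sym_('I_((2 ^ (divn d c))%N))) /\
     (* G permutes the S_i by conjugation (this action defines P), and
        transitively, so that the S_i are all conjugate *)
     ((forall g i, g \in G -> exists j, S i :^ g = S j) /\
     (forall i j, exists2 g, g \in G & S i :^ g = S j))
   & (* O = K/N, K the kernel of the action of G on {S_i}, embeds in
        Out(S_1) x ... x Out(S_c) via conjugation: an element of K inducing an
        inner automorphism on every S_i lies in N *)
     forall g, g \in G -> (forall i, S i :^ g = S i) ->
       (forall i, exists2 s, s \in S i & forall x, x \in S i -> x ^ g = x ^ s) ->
       g \in N].

(* Main.v *)
Require Import Defs.
From HB Require Import structures.
From mathcomp Require Import all_boot all_order all_algebra all_fingroup all_solvable all_field zify.
Set Implicit Arguments. Unset Strict Implicit. Unset Printing Implicit Defensive.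
Import GRing.Theory.
Section S_A.
Local Open Scope ring_scope.

Lemma F2_cases (c : 'F_2) : c = 0 \/ c = 1.
Proof. by case: c => [[|[|k]]] //= Hk; [left|right]; apply/val_inj. Qed.

Lemma F2_addxx (c : 'F_2) : c + c = 0.
Proof. by case: (F2_cases c) => ->; apply/val_inj. Qed.

Lemma brick_addxx m (x : brickT m) : x + x = 0.
Proof. by apply/rowP => i; rewrite !mxE F2_addxx. Qed.

Lemma state_addxx m n (x : stateT m n) : x + x = 0.
Proof. by apply/ffunP => i; rewrite !ffunE brick_addxx. Qed.

Lemma translE m n (v x : stateT m n) : transl v x = x + v.
Proof. by rewrite permE. Qed.

Lemma transl0 m n : transl (0 : stateT m n) = 1%g.
Proof. by apply/permP => x; rewrite translE addr0 perm1. Qed.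

Lemma translD m n (a b : stateT m n) : (transl a * transl b)%g = transl (a + b).
Proof. by apply/permP => x; rewrite permM !translE addrA. Qed.

Lemma card_state m n : #|[set: stateT m n]| = (2 ^ (m * n))%N.
Proof. by rewrite cardsT card_ffun card_mx card_Fp // card_ord mul1n -expnM mulnC. Qed.

End S_A.

Section S_B.
Local Open Scope ring_scope.


Lemma vspace_of_set m (A : {set brickT m}) :
  0 \in A -> (forall a b, a \in A -> b \in A -> a + b \in A) ->
  exists U : {vspace brickT m}, (forall x, (x \in U) = (x \in A)) /\ #|A| = (2 ^ \dim U)%N.
Proof.
move=> A0 AD; pose X := in_tuple (enum A).
have memU : forall x, (x \in <<X>>%VS) = (x \in A).
  move=> x; apply/idP/idP => [Hx|Hx]; last by apply: memv_span; rewrite mem_enum.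
  rewrite (coord_span Hx); apply: (big_ind (fun y => y \in A)) => // i _.
  have Xi : X`_i \in A by rewrite -mem_enum; apply: mem_nth; exact: ltn_ord.
  by case: (F2_cases (coord X i x)) => ->; rewrite ?scale0r ?scale1r.
exists <<X>>%VS; split => //.
have -> : (2 ^ \dim <<X>>)%N = #|<<X>>%VS| by rewrite card_vspace card_Fp.
by apply: eq_card => x; rewrite memU.
Qed.

End S_B.


Section Count.
Local Open Scope ring_scope.
Lemma count_fibers m (F : brickT m -> brickT m) (D : {set brickT m}) k :
  (forall x, F x \in D) -> (forall v, #|[set x | F x == v]| <= k)%N ->
  (2 ^ m <= #|D| * k)%N.
Proof.
move=> FD Hk.
have -> : (2 ^ m)%N = (\sum_(x : brickT m) 1)%N.
  by rewrite sum1_card card_mx card_Fp // mul1n.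
rewrite (partition_big F (mem D)) //=.
rewrite -sum_nat_const; apply: leq_sum => v Dv.
rewrite sum1_card; apply: leq_trans (Hk v).
by rewrite cardsE /= leq_eqVlt; apply/orP; left; apply/eqP; apply: eq_card => x /=; rewrite ?inE.
Qed.
End Count.


Section Core.
Local Open Scope ring_scope.
Variables (m n r : nat) (f : 'I_n -> {perm brickT m}) (gam lam : {perm stateT m n}).
Hypothesis gamE : forall v, gam v = [ffun i => f i (v i)].
Hypothesis f0 : forall i, f i 0 = 0.
Hypothesis lamL : in_GL lam.
Hypothesis Hbr :
  ((1 < r < m)%N /\
     (forall i : 'I_n, diff_uniform (f i) (2 ^ r)
                      /\ strongly_anti_invariant (f i) (r - 1)))
   \/
   ((1 <= r < m)%N /\
     (forall i : 'I_n, weakly_uniform (f i) (2 ^ r)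
                      /\ strongly_anti_invariant (f i) r)).

Definition ej j (a : brickT m) : stateT m n := [ffun i => if i == j then a else 0].

Lemma ejD j a b : ej j (a + b) = ej j a + ej j b.
Proof. by apply/ffunP => i; rewrite !ffunE; case: eqP => // _; rewrite addr0. Qed.

Lemma ej0 j : ej j 0 = 0.
Proof. by apply/ffunP => i; rewrite !ffunE; case: eqP. Qed.

Lemma gam_ej j a : gam (ej j a) = ej j (f j a).
Proof. by apply/ffunP => i; rewrite gamE !ffunE; case: eqP => // ->. Qed.

Lemma gam0 : gam 0 = 0.
Proof. by apply/ffunP => i; rewrite gamE !ffunE f0. Qed.

Lemma lamD a b : lam (a + b) = lam a + lam b.
Proof. by have := lamL 1 a b; rewrite !scale1r. Qed.

Lemma addK2 (x y : stateT m n) : x + y + y = x.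
Proof. by rewrite -addrA state_addxx addr0. Qed.

Lemma addK2b (x y : brickT m) : x + y + y = x.
Proof. by rewrite -addrA brick_addxx addr0. Qed.

Variable O : {set stateT m n}.
Hypothesis O0 : 0 \in O.
Hypothesis OD : forall a b, a \in O -> b \in O -> a + b \in O.
Hypothesis Hcond : forall x u, u \in O ->
  (gam * lam)%g (x + u) + (gam * lam)%g x \in (gam * lam)%g @: O.

Let W := gam @: O.

Lemma condG x u : u \in O -> gam (x + u) + gam x \in W.
Proof.
move=> uO; have /imsetP[o oO] := Hcond x uO.
rewrite !permM -lamD => /perm_inj ->; exact: imset_f.
Qed.

Lemma W0 : 0 \in W.
Proof. by rewrite -gam0 imset_f. Qed.

Lemma WD a b : a \in W -> b \in W -> a + b \in W.
Proof.
move=> /imsetP[o1 o1O ->] /imsetP[o2 o2O ->].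
have := condG o1 (OD o1O o2O); rewrite addrA state_addxx add0r addrC //.
Qed.

Lemma claim j u : u \in O -> u j != 0 -> forall a, ej j a \in O.
Proof.
move=> uO uj0.
pose Aj := [set a | ej j a \in O]; pose Bj := [set b | ej j b \in W].
have Aj0 : 0 \in Aj by rewrite inE ej0.
have AjD : forall a b, a \in Aj -> b \in Aj -> a + b \in Aj.
  by move=> a b; rewrite !inE ejD; apply: OD.
have Bj0 : 0 \in Bj by rewrite inE ej0 W0.
have BjD : forall a b, a \in Bj -> b \in Bj -> a + b \in Bj.
  by move=> a b; rewrite !inE ejD; apply: WD.
have fAB : f j @: Aj = Bj.
  apply/setP => b; apply/imsetP/idP => [[a aA ->]|].
    by rewrite inE -gam_ej; apply: imset_f; rewrite inE in aA.
  rewrite inE => /imsetP[o oO Ho].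
  have oE : o = ej j (o j).
    apply/ffunP => i; rewrite ffunE; case: eqP => [->//|/eqP ij].
    have := congr1 (fun v : stateT m n => v i) Ho; rewrite gamE !ffunE (negbTE ij).
    by rewrite -(f0 i) => /perm_inj <-.
  exists (o j); first by rewrite inE -oE.
  have := congr1 (fun v : stateT m n => v j) Ho; rewrite gamE !ffunE eqxx //.
have cardAB : #|Aj| = #|Bj| by rewrite -fAB card_imset //; apply: perm_inj.
have [UA [memA cardA]] := vspace_of_set Aj0 AjD.
have [UB [memB cardB]] := vspace_of_set Bj0 BjD.
have fUAB : f j @: [set x | x \in UA] = [set x | x \in UB].
  have -> : [set x | x \in UA] = Aj by apply/setP => x; rewrite inE memA.
  by rewrite fAB; apply/setP => x; rewrite [RHS]inE memB.
have bound1 : forall y, fder (f j) (u j) y + fder (f j) (u j) 0 \in Bj.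
  move=> y; rewrite inE.
  have := WD (condG (ej j y) uO) (condG (ej j 0) uO).
  congr (_ \in W); apply/ffunP => i; rewrite /fder !gamE !ffunE.
  case: eqP => [->|_]; first by rewrite add0r f0 addr0.
  by rewrite ?add0r; apply: brick_addxx.
pose D1 := [set fder (f j) (u j) 0 + b | b in Bj].
have Im1 : forall y, fder (f j) (u j) y \in D1.
  move=> y; apply/imsetP; exists (fder (f j) (u j) y + fder (f j) (u j) 0) => //.
  by rewrite [RHS]addrC addK2b.
have cardIm : (#|D1| <= #|Bj|)%N by apply: leq_imset_card.
have fullA : UA = fullv -> forall a, ej j a \in O.
  by move=> UAf a; have := memA a; rewrite UAf memvf inE => /esym.
case: Hbr => [[/andP[r1 rm] Hb] | [/andP[r1 rm] Hb]].
- have [Hdu Hai] := Hb j.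
  have c1 := count_fibers Im1 (fun v => Hdu (u j) v uj0).
  have c1' : (2 ^ m <= 2 ^ (\dim UB + r))%N.
    rewrite expnD -cardB; apply: (leq_trans c1); rewrite leq_mul2r cardIm orbT //.
  rewrite leq_exp2l // in c1'.
  have Bj1 : (1 < #|Bj|)%N.
    by rewrite cardB -{1}(expn0 2) ltn_exp2l //; move: c1' rm; lia.
  have [b bB b0] : exists2 b, b \in Bj & b != 0.
    have [x [y [xB yB xy]]] := card_gt1P Bj1.
    case: (eqVneq x 0) => [x0|x0]; last by exists x.
    by exists y => //; rewrite -x0 eq_sym.
  rewrite -fAB in bB; have /imsetP[a aA ba] := bB.
  have a0 : a != 0 by apply: contraNneq b0 => a0; rewrite ba a0 f0.
  have aO : ej j a \in O by rewrite inE in aA.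
  have Im2 : forall y, fder (f j) a y \in Bj :\ 0.
    move=> y; rewrite !inE; apply/andP; split.
      apply: contra a0 => /eqP H.
      have H' : f j (y + a) = f j y by rewrite -(addK2b (f j (y + a)) (f j y)); move: H; rewrite /fder => ->; rewrite add0r.
      by move/perm_inj: H' => H2; apply/eqP; apply: (addrI y); rewrite addr0.
    have := condG (ej j y) aO; rewrite -ejD !gam_ej -ejD //.
  have c2 := count_fibers Im2 (fun v => Hdu a v a0).
  have lt2 : (#|Bj :\ 0%R| < #|Bj|)%N by rewrite (cardsD1 0%R Bj) Bj0.
  have c2' : (2 ^ m < 2 ^ (\dim UB + r))%N.
    apply: (leq_ltn_trans c2); rewrite expnD -cardB ltn_mul2r expn_gt0 /= lt2 //.
  rewrite ltn_exp2l // in c2'.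
  case: (Hai UA UB fUAB) => [[dAB dlt]|[UAf _]]; last exact: fullA.
  rewrite -dAB in c2'; exfalso; move: c2' dlt r1; lia.
- have [Hwu Hai] := Hb j.
  have H1 := Hwu (u j) uj0.
  have sub1 : [set fder (f j) (u j) x | x : brickT m] \subset D1.
    by apply/subsetP => z /imsetP[x _ ->]; apply: Im1.
  have H2 : (2 ^ (m - 1) < #|Bj| * 2 ^ r)%N.
    apply: (leq_trans H1); rewrite leq_mul2r; apply/orP; right.
    exact: leq_trans (subset_leq_card sub1) cardIm.
  rewrite cardB -expnD ltn_exp2l // in H2.
  case: (Hai UA UB fUAB) => [[dAB dlt]|[UAf _]]; last exact: fullA.
  rewrite -dAB in H2; exfalso; move: H2 dlt; lia.
Qed.

Lemma O_wall : exists J : {set 'I_n}, O = wall m J.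
Proof.
exists [set j | [exists u in O, u j != 0]].
apply/setP => v; rewrite inE; apply/idP/forallP => [vO i|Hv].
  apply/implyP => iJ; apply: contraR iJ => vi; rewrite inE; apply/existsP; exists v.
  by rewrite vO.
have -> : v = \sum_(j < n) ej j (v j).
  apply/ffunP => i; rewrite sum_ffunE (bigD1 i) //= big1 => [|k ki].
    by rewrite !ffunE eqxx addr0.
  by rewrite !ffunE eq_sym (negbTE ki).
apply: (big_ind (fun x => x \in O)) => // j _.
have := Hv j; case: (boolP (j \in _)) => jJ /=.
  rewrite inE in jJ; have /existsP[u /andP[uO uj]] := jJ => _.
  exact: claim uO uj _.
by move/eqP => ->; rewrite ej0.
Qed.
End Core.

Section Walls.
Local Open Scope ring_scope.
Variables (m n : nat) (f : 'I_n -> {perm brickT m}) (gam : {perm stateT m n}).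
Hypothesis gamE : forall v, gam v = [ffun i => f i (v i)].
Hypothesis f0 : forall i, f i 0 = 0.

Lemma gam_wall J : gam @: wall m J = wall m J.
Proof.
apply/eqP; rewrite eqEcard card_imset ?leqnn ?andbT; last exact: perm_inj.
apply/subsetP => _ /imsetP[v vJ ->]; rewrite inE; apply/forallP => i.
apply/implyP => iJ; rewrite gamE ffunE.
rewrite inE in vJ; have /implyP/(_ iJ)/eqP -> := forallP vJ i.
by rewrite f0.
Qed.
End Walls.



Section Orb.
Local Open Scope ring_scope.
Variables (m n : nat) (X : {group {perm stateT m n}}).
Hypothesis Hdec : forall v : stateT m n, exists a b,
  [/\ a \in X, (forall s, s \in X -> commute s b) & transl v = (a * b)%g].

Definition orb (Y : {set {perm stateT m n}}) (y : stateT m n) := [set (s : {perm stateT m n}) y | s in Y].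

Lemma orbK s y v : s \in X -> exists2 s', s' \in X & s y + v = s' (y + v).
Proof.
move=> sX; have [a [b [aX cb tv]]] := Hdec v.
exists (a^-1 * s * a)%g; first by rewrite !groupM ?groupV.
have e1 : y + v = b (a y) by rewrite -translE tv permM.
have e2 : b (a y) = a (b y) by rewrite -!permM (cb a aX).
have e3 : forall z, (a^-1 * s * a)%g (a z) = a (s z).
  by move=> z; rewrite !permM -(permM a (a^-1)%g) mulgV perm1.
have e4 : s (b y) = b (s y) by rewrite -!permM (cb s sX).
have e5 : a (b (s y)) = b (a (s y)) by rewrite -!permM (cb a aX).
by rewrite e1 e2 e3 e4 e5 -translE tv permM.
Qed.

Let O := orb X 0.

Lemma orb0 : 0 \in O.
Proof. by apply/imsetP; exists 1%g; rewrite ?group1 ?perm1. Qed.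

Lemma orbD a b : a \in O -> b \in O -> a + b \in O.
Proof.
move=> /imsetP[s sX ->] /imsetP[t tX ->].
have [s' s'X ->] := orbK 0 (t 0) sX.
by rewrite add0r -permM; apply: imset_f; rewrite groupM.
Qed.

Lemma orb_coset x u : u \in O -> x + u \in orb X x.
Proof.
move=> /imsetP[s sX ->]; rewrite addrC; have [s' s'X ->] := orbK 0 x sX.
by rewrite add0r; apply: imset_f.
Qed.

Lemma orb_back x z : z \in orb X x -> z + x \in O.
Proof.
move=> /imsetP[s sX ->]; have [s' s'X ->] := orbK x x sX.
by rewrite state_addxx; apply: imset_f.
Qed.
End Orb.

Lemma orb_conj m n (Y : {set {perm stateT m n}}) (g : {perm stateT m n}) x :
  g @: orb Y x = orb (Y :^ g)%g (g x).
Proof.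
apply/setP => z; apply/imsetP/imsetP => [[_ /imsetP[s sY ->] ->]|[s' /imsetP[s sY ->] ->]].
  exists (s ^ g)%g; first exact: imset_f.
  by rewrite !permM -(permM g (g^-1)%g) mulgV perm1.
exists (s x); first exact: imset_f.
by rewrite conjgE !permM -(permM g (g^-1)%g) mulgV perm1.
Qed.


Section Prim.
Local Open Scope ring_scope.
Variables (m n r : nat) (f : 'I_n -> {perm brickT m}) (gam lam : {perm stateT m n}).
Variable (G : {group {perm stateT m n}}).
Hypothesis gamE : forall v, gam v = [ffun i => f i (v i)].
Hypothesis f0 : forall i, f i 0 = 0.
Hypothesis lamL : in_GL lam.
Hypothesis Hbr :
  ((1 < r < m)%N /\
     (forall i : 'I_n, diff_uniform (f i) (2 ^ r)
                      /\ strongly_anti_invariant (f i) (r - 1)))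
   \/
   ((1 <= r < m)%N /\
     (forall i : 'I_n, weakly_uniform (f i) (2 ^ r)
                      /\ strongly_anti_invariant (f i) r)).
Hypothesis Hprop : proper_mixing lam.
Hypothesis gG : (gam * lam)%g \in G.
Hypothesis tG : forall v, transl v \in G.

Lemma lam0 : lam 0 = 0.
Proof.
apply: (@addrI _ (lam 0)); rewrite addr0 -(lamD lamL) addr0 //.
Qed.

Lemma g0 : (gam * lam)%g 0 = 0.
Proof. by rewrite permM (gam0 gamE f0) lam0. Qed.

Lemma prim : [primitive G, on [set: stateT m n] | 'P].
Proof.
apply/andP; split.
  apply/imsetP; exists 0 => //; apply/eqP; rewrite eqEsubset subsetT ?andbT /=.
  apply/subsetP => y _; have := mem_orbit 'P (0 : stateT m n) (tG y).
  move=> H; suff e : y = transl y 0 by rewrite {1}e.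
  by rewrite translE add0r.
apply/negP => /existsP[Q /and3P[partQ actsQ /andP[Q1 Q2]]].
have /and3P[/eqP covQ trivQ Q0] := partQ.
have inC : forall x, x \in cover Q by move=> x; rewrite covQ inE.
have pimg : forall (p : {perm stateT m n}) (X : {set stateT m n}), p \in G -> X \in Q -> p @: X \in Q.
  by move=> p X pG XQ; have := actsP actsQ p pG X; rewrite XQ.
have pbl : forall (p : {perm stateT m n}) (x : stateT m n), p \in G -> pblock Q (p x) = p @: pblock Q x.
  move=> p x pG; apply: def_pblock => //; first exact: pimg (pblock_mem (inC x)).
  by apply: imset_f; rewrite mem_pblock.
pose B := pblock Q (0 : stateT m n).
have BQ : B \in Q by apply: pblock_mem.
have B0 : 0 \in B by rewrite mem_pblock.
have Btr : forall x, pblock Q x = transl x @: B.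
  by move=> x; rewrite -pbl // translE add0r.
have BD : forall a b, a \in B -> b \in B -> a + b \in B.
  move=> a b aB bB; have : pblock Q b = B by apply: def_pblock.
  by rewrite Btr => <-; rewrite -translE; apply: imset_f.
have gB : (gam * lam)%g @: B = B by rewrite -pbl // g0.
have Hcond : forall x u, u \in B ->
    (gam * lam)%g (x + u) + (gam * lam)%g x \in (gam * lam)%g @: B.
  move=> x u uB; rewrite gB.
  have : x + u \in pblock Q x by rewrite Btr addrC -translE; apply: imset_f.
  move/(imset_f (gam * lam)%g); rewrite -pbl // Btr => /imsetP[z zB ->].
  by rewrite translE addK2.
have [J BJ] := O_wall gamE f0 lamL Hbr B0 BD Hcond.
have cardQ : #|[set: stateT m n]| = (#|Q| * #|B|)%N.
  rewrite (card_partition partQ) -sum_nat_const; apply: eq_bigr => X XQ.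
  have /set0Pn[x xX] : X != set0 by apply: contraNneq Q0 => <-.
  by rewrite -(def_pblock trivQ XQ xX) Btr card_imset //; apply: perm_inj.
case: (eqVneq J set0) => [J0|Jn0].
  have sub : B \subset [set (0 : stateT m n)].
    apply/subsetP => v.
    rewrite BJ J0 inE => /forallP Hv; rewrite inE; apply/eqP/ffunP => i.
    by have := Hv i; rewrite inE /= => /eqP ->; rewrite ffunE.
  have := subset_leq_card sub; rewrite cards1.
  move: Q2; rewrite cardQ; case: #|B| => [|[|k]] //; first by rewrite muln0.
  by rewrite muln1 ltnn.
case: (eqVneq J setT) => [JT|JnT].
  have BT : B = setT.
    by apply/setP => v; rewrite BJ JT !inE; apply/forallP => i; rewrite inE.
  have X0 : (0 < #|[set: stateT m n]|)%N by apply/card_gt0P; exists 0.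
  move: Q1; have := cardQ; rewrite BT -{1}(mul1n #|[set: stateT m n]|).
  by move/eqP; rewrite eqn_pmul2r // => /eqP <-.
apply: (Hprop (S := J)); first by split.
have e : lam @: (gam @: B) = (gam * lam)%g @: B.
  by rewrite -imset_comp; apply: eq_imset => x; rewrite /= permM.
have gW : gam @: B = B by rewrite BJ (gam_wall gamE f0).
by rewrite -BJ -{1}gW e gB.
Qed.
End Prim.


Lemma fact_not_pow k d : 3 <= d -> k`! != 2 ^ d.
Proof.
move=> d3; case: (leqP k 2) => k2.
  have kf : k`! <= 2 by case: k k2 => [|[|[|]]].
  have : 2 < 2 ^ d by rewrite -{1}(expn1 2) ltn_exp2l //; lia.
  by apply: contraTneq => <-; rewrite -leqNgt.
apply/eqP => e.
have : 3 %| k`! by apply: dvdn_fact; lia.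
by rewrite e Euclid_dvdX.
Qed.

Lemma card_AltSym_not k d : 3 <= d ->
  #|Alt 'I_k| != 2 ^ d /\ #|Sym 'I_k| != 2 ^ d.
Proof.
move=> d3; have cS : #|Sym 'I_k| = k`! by rewrite cardsT card_Sn.
split; last by rewrite cS fact_not_pow.
case: (leqP k 1) => k1.
  have : #|Alt 'I_k| <= #|Sym 'I_k| by apply: subset_leq_card; apply: subsetT.
  rewrite cS; have kf : k`! <= 1 by clear cS; case: k k1 => [|[|]].
  have : 2 < 2 ^ d by rewrite -{1}(expn1 2) ltn_exp2l //; lia.
  move=> h1 h2; apply/eqP => e; move: h1 h2 kf; rewrite e; lia.
apply/eqP => e; have := card_Alt (T := 'I_k); rewrite card_ord => /(_ k1).
by rewrite e -expnS => /esym/eqP; rewrite (negbTE (fact_not_pow _ _)) //; lia.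
Qed.


Section Wr.
Local Open Scope ring_scope.
Variables (m n r : nat) (f : 'I_n -> {perm brickT m}) (gam lam : {perm stateT m n}).
Variable (G : {group {perm stateT m n}}).
Hypothesis gamE : forall v, gam v = [ffun i => f i (v i)].
Hypothesis f0 : forall i, f i 0 = 0.
Hypothesis lamL : in_GL lam.
Hypothesis Hbr :
  ((1 < r < m)%N /\
     (forall i : 'I_n, diff_uniform (f i) (2 ^ r)
                      /\ strongly_anti_invariant (f i) (r - 1)))
   \/
   ((1 <= r < m)%N /\
     (forall i : 'I_n, weakly_uniform (f i) (2 ^ r)
                      /\ strongly_anti_invariant (f i) r)).
Hypothesis Hsprop : strongly_proper_mixing lam.
Hypothesis gG : (gam * lam)%g \in G.
Hypothesis m1 : (1 < m)%N.
Hypothesis n1 : (1 < n)%N.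

Lemma not_wreath : ~ wreath_type G.
Proof.
case=> c [S [T [N [[c1 cd] [defN nNG] [defT HT] [Hiso [Hconj Htr]] _]]]].
set g : {perm stateT m n} := (gam * lam)%g.
have cS : forall i j, i != j -> (S i \subset 'C(S j))%g.
  have H : (\big[cprod/1]_(i < c) S i == (\prod_(i < c) S i)%G)%g.
    by rewrite (bigdprodWcp defN) bigprodGE (bigdprodWY defN).
  by move/bigcprodYP: H => cS i j; apply: cS.
have tgs : group_set (translGroup m n).
  apply/group_setP; split; first by apply/imsetP; exists 0; rewrite ?transl0.
  by move=> _ _ /imsetP[a _ ->] /imsetP[b _ ->]; rewrite translD; apply/imsetP; exists (a + b).
pose TG := Group tgs.
have {}defT : (\big[dprod/1]_(i < c) T i)%g = TG := defT.
have TsubTr : forall j, (T j \subset translGroup m n)%g.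
  move=> j; rewrite -[translGroup m n]/(gval TG) -(bigdprodWY defT).
  apply: (@subset_trans _ _ (\bigcup_(i < c) T i)%g); last exact: sub_gen.
  by apply/subsetP => x xT; apply/bigcupP; exists j.
have dec : forall i v, exists a b, [/\ a \in S i,
    (forall s, s \in S i -> commute s b) & transl v = (a * b)%g].
  move=> i v.
  have tv : transl v \in TG by apply/imsetP; exists v.
  have [cc [ccT ccE _]] := mem_bigdprod defT tv.
  have ccTr : forall j0, cc j0 = transl (cc j0 0).
    move=> j0; have /imsetP[w _ ->] := subsetP (TsubTr j0) _ (ccT j0 isT).
    by rewrite translE add0r.
  have pmorph : forall (P : pred 'I_c),
      (\prod_(j | P j) cc j)%g = transl (\sum_(j | P j) cc j 0).
    move=> P; elim/big_rec2: _ => [|j x p Pj ->]; first by rewrite transl0.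
    by rewrite {1}ccTr translD.
  exists (cc i), (\prod_(j | j != i) cc j)%g; split.
  - by have [sTS _ _] := HT i; apply: (subsetP sTS); apply: ccT.
  - move=> s sS; apply: (big_ind (fun b => commute s b)).
    + exact: commute1.
    + by move=> x y; apply: commuteM.
    move=> j ji; have [sTS _ _] := HT j.
    have := subsetP (cS j i ji) _ (subsetP sTS _ (ccT j isT)).
    by move/centP => /(_ s sS) /commute_sym.
  rewrite ccE (pmorph predT) (pmorph (fun j => j != i)) {1}ccTr translD.
  by rewrite (bigD1 i) //=.
have gG0 : g 0 = 0 by apply: (g0 gamE f0 lamL).
pose O i := orb (S i) 0.
have gO : forall i j, (S i :^ g)%g = S j -> g @: O i = O j.
  by move=> i j Sij; rewrite /O orb_conj Sij gG0.
have cond : forall i x u, u \in O i -> g (x + u) + g x \in g @: O i.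
  move=> i x u uO; have [j Sij] := Hconj g i gG; rewrite (gO i j Sij).
  have := orb_coset (dec i) x uO; move/(imset_f g); rewrite orb_conj Sij.
  exact: orb_back (dec j) _ _.
have walls : forall i, exists J, O i = wall m J.
  move=> i; have := @O_wall m n r f gam lam gamE f0 lamL Hbr (O i) (orb0 (S i)).
  move=> /(_ (orbD (dec i)) (cond i)); exact.
have ntr : forall i, exists2 w, w != 0 & w \in O i.
  move=> i; have [sTS _ cT] := HT i.
  have dpos : (0 < (m * n) %/ c)%N.
    rewrite divn_gt0; last by lia.
    by apply: dvdn_leq => //; rewrite muln_gt0; apply/andP; split; lia.
  have : (1 < #|T i|)%N by rewrite cT -{1}(expn0 2) ltn_exp2l.
  case/card_gt1P => x [y [xT yT xy]].
  have [t tT t1] : exists2 t, t \in T i & t != 1%g.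
    case: (eqVneq x 1%g) => [x1|x1]; last by exists x.
    by exists y => //; rewrite -x1 eq_sym.
  have /imsetP[w _ tw] := subsetP (TsubTr i) _ tT.
  exists w.
    by apply: contraNneq t1 => w0; rewrite tw w0 transl0.
  by rewrite -[w]add0r -translE -tw; apply: imset_f; apply: (subsetP sTS).
have wallidx : forall i J, O i = wall m J -> O i != setT -> is_wall_index J.
  move=> i J OJ OT; split.
    apply/eqP => J0; have [w w0 wO] := ntr i; move: wO; rewrite OJ J0 inE.
    move/forallP => Hw; apply/negP: w0; apply/negPn/eqP/ffunP => k.
    by have := Hw k; rewrite inE ffunE => /eqP.
  apply/eqP => JT; move/eqP: OT; apply; apply/setP => v.
  by rewrite OJ JT !inE; apply/forallP => k; rewrite inE.
have full : forall i, O i = setT.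
  move=> i; apply/eqP/negPn/negP => OT.
  have [J OJ] := walls i; have [j Sij] := Hconj g i gG.
  have [J' OJ'] := walls j.
  have OjT : O j != setT.
    apply: contra OT => /eqP OjT.
    have ce : #|O i| = #|O j|.
      by rewrite -(gO i j Sij) (card_imset _ (@perm_inj _ g)).
    by rewrite eqEcard subsetT ce OjT leqnn.
  apply: (Hsprop (wallidx i J OJ OT) (wallidx j J' OJ' OjT)).
  have e : lam @: (gam @: O i) = g @: O i.
    by rewrite -imset_comp; apply: eq_imset => x; rewrite /= permM.
  by rewrite -OJ -OJ' -(gO i j Sij) -e OJ (gam_wall gamE f0).
have c0 : (0 < c)%N by lia.
pose i0 : 'I_c := Ordinal c0; pose i1 : 'I_c := Ordinal c1.
have i10 : i1 != i0 by [].
have cS10 := cS i1 i0 i10.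
have ct : forall t u, t \in S i0 -> u \in S i1 -> u (t 0) = t (u 0).
  move=> t u tS uS; have := subsetP cS10 u uS; move/centP => /(_ t tS) ctu.
  by rewrite -!permM ctu.
have inj : {in S i1 &, injective (fun s : {perm stateT m n} => s 0)}.
  move=> s s' sS s'S /= e; apply/permP => y.
  have : y \in O i0 by rewrite full inE.
  case/imsetP => t tS ->.
  by rewrite (ct t s tS sS) (ct t s' tS s'S) e.
have cardS : #|S i1| = (2 ^ (m * n))%N.
  rewrite -card_state -(full i1) /O /orb card_in_imset //.
have d3 : (3 <= m * n)%N.
  by apply: leq_trans (leq_mul m1 n1).
have [h1 h2] := card_AltSym_not (2 ^ ((m * n) %/ c)) d3.
by case: (Hiso i1) => /card_isog; rewrite cardS => e; [move: h1 | move: h2]; rewrite -e eqxx.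
Qed.
End Wr.

Theorem proposition4p4
  (m n l : nat) (K : finType)
  (gam lam : 'I_l -> {perm stateT m n})
  (brk : 'I_l -> 'I_n -> {perm brickT m})
  (phi : K -> 'I_l -> stateT m n)
  (r : nat) (h : 'I_l) :
  1 < m -> 1 < n ->
  (* C is a tb cipher *)
  (forall j : 'I_l, bricklayer_with (gam j) (brk j)) ->
  (forall j : 'I_l, gam j 0%R = 0%R) ->
  (forall j : 'I_l, in_GL (lam j)) ->
  (* round h is strongly proper *)
  strongly_proper_round lam phi h ->
  (* hypotheses on the bricks of gam_h: alternative (A) or (B), uniformly *)
  ((1 < r < m) /\
     (forall i : 'I_n, diff_uniform (brk h i) (2 ^ r)
                      /\ strongly_anti_invariant (brk h i) (r - 1))
   \/
   (1 <= r < m) /\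
     (forall i : 'I_n, weakly_uniform (brk h i) (2 ^ r)
                      /\ strongly_anti_invariant (brk h i) r)) ->
  [primitive Gamma_h gam lam phi h, on [set: stateT m n] | 'P]
  /\ ~ wreath_type (Gamma_h gam lam phi h).
Proof.
move=> m1 n1 Hbl Hg0 HGL [Hprop Hsprop Hphi] Hbr.
have gamE := Hbl h.
have f0 : forall i, brk h i 0%R = 0%R.
  by move=> i; have := congr1 (fun v : stateT m n => v i) (Hg0 h); rewrite gamE !ffunE.
have gG : (gam h * lam h)%g \in Gamma_h gam lam phi h.
  have [k0 k0E] := Hphi 0%R; apply: mem_gen; apply/imsetP; exists k0 => //.
  by rewrite /round_perm k0E transl0 mulg1.
have tG : forall v, transl v \in Gamma_h gam lam phi h.
  move=> v; have [k kE] := Hphi v.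
  have H : round_perm gam lam phi k h \in Gamma_h gam lam phi h.
    by apply: mem_gen; apply/imsetP; exists k.
  rewrite /round_perm kE in H.
  by have := groupM (groupVr gG) H; rewrite mulgA mulVg mul1g.
split.
  exact: (prim gamE f0 (HGL h) Hbr Hprop gG tG).
exact: (not_wreath gamE f0 (HGL h) Hbr Hsprop gG m1 n1).
Qed.
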